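(* Let $G=\mathbb{R}\times\mathbb{C}$ be the model of $\widetilde{\mathrm{SL}}_2(\mathbb{R})$ described below, let $\eta>0$ and $C^+_\eta=\{(\xi,\zeta)\in\mathbb{R}\times\mathbb{C}:\xi^2\ge(\eta+1)|\zeta|^2,\ \xi\ge 0\}$, and let $\tau=dc$ be the differential of the first coordinate. Then for every $(c,w)\in G$ and every nonzero $v\in(L_{(c,w)})_*C^+_\eta$ we have $\tau_{(c,w)}(v)>0$, and there are constants $A,B>0$ (depending only on $\eta$) such that $\dfrac{|v|}{\tau_{(c,w)}(v)}\le A+B|w|$ for all such $(c,w)$ and $v$, where $|v|$ is the Euclidean norm on $\mathbb{R}\times\mathbb{C}\cong\mathbb{R}^3$.
   Context: $G=\mathbb{R}\times\mathbb{C}$ with identity $(0,0)$ and multiplication $(c_1,w_1)\cdot(c_2,w_2)=(c,w)$, $c=c_1+c_2+\arctan\frac{\operatorname{Im}(w_1\bar w_2e^{-i(c_1+c_2)})}{\sqrt{1+|w_1|^2}\sqrt{1+|w_2|^2}+\operatorname{Re}(w_1\bar w_2e^{-i(c_1+c_2)})}$, $w=w_2\sqrt{1+|w_1|^2}e^{ic_1}+w_1\sqrt{1+|w_2|^2}e^{-ic_2}$; this is the universal cover of $\mathrm{SU}_{1,1}\cong\mathrm{SL}_2(\mathbb{R})$. $L_{(c,w)}$ is left multiplication and $(L_{(c,w)})_*$ its differential at the identity, where tangent spaces are identified with $\mathbb{R}\times\mathbb{C}$ via the coordinates. *)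

(* Defs.v *)
From Stdlib Require Import Reals.
From Coquelicot Require Import Coquelicot.
Open Scope R_scope.

Definition cis (t : R) : C := (cos t, sin t).

(* The model G = R x C of the universal cover of SU(1,1) ~ SL_2(R). *)
Definition G := (R * C)%type.

Definition gmul (g1 g2 : G) : G :=
  let (c1, w1) := g1 in
  let (c2, w2) := g2 in
  let z := Cmult (Cmult w1 (Cconj w2)) (cis (- (c1 + c2))) in
  let s1 := sqrt (1 + Cmod w1 ^ 2) in
  let s2 := sqrt (1 + Cmod w2 ^ 2) in
  ( c1 + c2 + atan (Im z / (s1 * s2 + Re z)),
    Cplus (Cmult (Cmult w2 (RtoC s1)) (cis c1))
          (Cmult (Cmult w1 (RtoC s2)) (cis (- c2))) ).

Definition Lmul (g : G) : G -> G := fun h => gmul g h.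

Definition gid : G := (0, RtoC 0).

(* dL is the differential of L_g at the identity (Fréchet derivative, tangent
   spaces identified with R x C ~ R^3 via the coordinates). *)
Definition is_dL (g : G) (dL : G -> G) : Prop :=
  filterdiff (Lmul g) (locally gid) dL.

Definition cone (eta : R) (x : G) : Prop :=
  fst x ^ 2 >= (eta + 1) * Cmod (snd x) ^ 2 /\ fst x >= 0.

Definition tau (v : G) : R := fst v.

Definition eucl (v : G) : R := sqrt (fst v ^ 2 + Cmod (snd v) ^ 2).

(* Main.v *)
Require Import Defs.
From Stdlib Require Import Reals Lra Psatz.
From Coquelicot Require Import Coquelicot.
Open Scope R_scope.

Notation U := (prod_NormedModule R_AbsRing R_NormedModule (prod_NormedModule R_AbsRing R_NormedModule R_NormedModule)).

Section D.
Variable x : U.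

Lemma Dcomp (f : U -> R) (phi : R -> R) lf d (L : U -> R) :
  filterdiff f (locally x) lf -> is_derive phi (f x) d ->
  (forall y, lf y * d = L y) -> filterdiff (fun h => phi (f h)) (locally x) L.
Proof.
intros Hf Hp HL. eapply filterdiff_ext_lin.
apply (filterdiff_comp' f phi x lf (fun y => scal y d)); [exact Hf| exact Hp].
intro y; simpl; rewrite <- HL; reflexivity.
Qed.

Lemma Dmul (f g : U -> R) lf lg (L : U -> R) :
  filterdiff f (locally x) lf -> filterdiff g (locally x) lg ->
  (forall y, lf y * g x + f x * lg y = L y) -> filterdiff (fun h => f h * g h) (locally x) L.
Proof.
intros Hf Hg HL. eapply filterdiff_ext_lin.
apply (filterdiff_mult_fct (K:=R_AbsRing) f g x lf lg); [exact Rmult_comm|exact Hf|exact Hg].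
intro y; simpl; rewrite <- HL; reflexivity.
Qed.

Lemma Dplus (f g : U -> R) lf lg (L : U -> R) :
  filterdiff f (locally x) lf -> filterdiff g (locally x) lg ->
  (forall y, lf y + lg y = L y) -> filterdiff (fun h => f h + g h) (locally x) L.
Proof.
intros Hf Hg HL. eapply filterdiff_ext_lin.
apply (filterdiff_plus_fct (F:=locally x) f g lf lg); [exact Hf|exact Hg].
intro y; simpl; rewrite <- HL; reflexivity.
Qed.

Lemma Dminus (f g : U -> R) lf lg (L : U -> R) :
  filterdiff f (locally x) lf -> filterdiff g (locally x) lg ->
  (forall y, lf y - lg y = L y) -> filterdiff (fun h => f h - g h) (locally x) L.
Proof.
intros Hf Hg HL. eapply filterdiff_ext_lin.
apply (filterdiff_minus_fct (F:=locally x) f g lf lg); [exact Hf|exact Hg].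
intro y; simpl; rewrite <- HL; unfold minus, plus, opp; simpl; reflexivity.
Qed.

Lemma Dconst (k : R) (L : U -> R) : (forall y, 0 = L y) -> filterdiff (fun _ : U => k) (locally x) L.
Proof.
intros HL. eapply filterdiff_ext_lin.
apply filterdiff_const.
intro y; simpl; rewrite <- HL; reflexivity.
Qed.

Lemma Dt (L : U -> R) : (forall y, fst y = L y) -> filterdiff (fun h : U => fst h) (locally x) L.
Proof.
intros HL. eapply filterdiff_ext_lin.
apply filterdiff_linear. apply is_linear_fst. exact HL.
Qed.

Lemma Da (L : U -> R) : (forall y, fst (snd y) = L y) -> filterdiff (fun h : U => fst (snd h)) (locally x) L.
Proof.
intros HL. eapply filterdiff_ext_lin.
apply filterdiff_linear. apply (is_linear_comp (fun t : U => snd t) (fun t => fst t)).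
apply is_linear_snd. apply is_linear_fst. exact HL.
Qed.

Lemma Db (L : U -> R) : (forall y, snd (snd y) = L y) -> filterdiff (fun h : U => snd (snd h)) (locally x) L.
Proof.
intros HL. eapply filterdiff_ext_lin.
apply filterdiff_linear. apply (is_linear_comp (fun t : U => snd t) (fun t => snd t)).
apply is_linear_snd. apply is_linear_snd. exact HL.
Qed.

Lemma Dpair3 (f1 f2 f3 : U -> R) l1 l2 l3 :
  filterdiff f1 (locally x) l1 -> filterdiff f2 (locally x) l2 -> filterdiff f3 (locally x) l3 ->
  filterdiff (fun h => (f1 h, (f2 h, f3 h)) : U) (locally x) (fun y => (l1 y, (l2 y, l3 y)) : U).
Proof.
intros H1 H2 H3.
assert (Hp : forall (V W : NormedModule R_AbsRing) (a : U -> V) (b : U -> W) la lb,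
  filterdiff a (locally x) la -> filterdiff b (locally x) lb ->
  filterdiff (fun h => (a h, b h) : prod_NormedModule R_AbsRing V W) (locally x)
     (fun y => (la y, lb y) : prod_NormedModule R_AbsRing V W)).
{ intros V W a b la lb Ha Hb.
  apply (filterdiff_comp'_2 a b (fun u v => (u, v)) x la lb (fun u v => (u, v)) Ha Hb).
  apply filterdiff_linear.
  apply (is_linear_prod (fun t : prod_NormedModule R_AbsRing V W => fst t) (fun t => snd t)); [apply is_linear_fst | apply is_linear_snd].
}
apply (Hp R_NormedModule _ f1 (fun h => (f2 h, f3 h))). exact H1.
apply (Hp R_NormedModule R_NormedModule). exact H2. exact H3.
Qed.
End D.

Section D2.
Variable x : U.
Lemma Dopp (f : U -> R) lf (L : U -> R) :
  filterdiff f (locally x) lf -> (forall y, - lf y = L y) -> filterdiff (fun h => - f h) (locally x) L.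
Proof.
intros Hf HL. eapply filterdiff_ext_lin.
apply (filterdiff_opp_fct (F:=locally x) f lf); exact Hf.
intro y; simpl; rewrite <- HL; reflexivity.
Qed.

Lemma is_derive_Rinv' (z : R) : z <> 0 -> is_derive (fun y : R => / y) z (- 1 / z ^ 2).
Proof. intro Hz. auto_derive. exact Hz. field. exact Hz. Qed.

Lemma Ddiv (f g : U -> R) lf lg (L : U -> R) :
  filterdiff f (locally x) lf -> filterdiff g (locally x) lg -> g x <> 0 ->
  (forall y, lf y * / g x + f x * (lg y * (- 1 / g x ^ 2)) = L y) ->
  filterdiff (fun h => f h / g h) (locally x) L.
Proof.
intros Hf Hg Hgx HL. unfold Rdiv at 1.
apply (Dmul x f (fun h => / g h) lf (fun y => lg y * (- 1 / g x ^ 2))); auto.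
apply (Dcomp x g (fun y => / y) lg (- 1 / g x ^ 2)); auto.
apply is_derive_Rinv'; auto.
Qed.
End D2.

Ltac fd :=
  lazymatch goal with
  | |- filterdiff (fun _ => ?k) _ _ => apply Dconst; intro; reflexivity
  | |- filterdiff (fun h => fst h) _ _ => apply Dt; intro; reflexivity
  | |- filterdiff (fun h => fst (snd h)) _ _ => apply Da; intro; reflexivity
  | |- filterdiff (fun h => snd (snd h)) _ _ => apply Db; intro; reflexivity
  | |- filterdiff (fun h => @?f h + @?g h) _ _ => eapply (Dplus _ f g); [fd | fd | intro; reflexivity]
  | |- filterdiff (fun h => @?f h - @?g h) _ _ => eapply (Dminus _ f g); [fd | fd | intro; reflexivity]
  | |- filterdiff (fun h => @?f h * @?g h) _ _ => eapply (Dmul _ f g); [fd | fd | intro; reflexivity]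
  | |- filterdiff (fun h => @?f h / @?g h) _ _ => eapply (Ddiv _ f g); [fd | fd | idtac | intro; reflexivity]
  | |- filterdiff (fun h => - @?f h) _ _ => eapply (Dopp _ f); [fd | intro; reflexivity]
  | |- filterdiff (fun h => atan (@?f h)) _ _ => eapply (Dcomp _ f atan); [fd | apply is_derive_atan | intro; reflexivity]
  | |- filterdiff (fun h => cos (@?f h)) _ _ => eapply (Dcomp _ f cos); [fd | apply is_derive_cos | intro; reflexivity]
  | |- filterdiff (fun h => sin (@?f h)) _ _ => eapply (Dcomp _ f sin); [fd | apply is_derive_sin | intro; reflexivity]
  | |- filterdiff (fun h => sqrt (@?f h)) _ _ => eapply (Dcomp _ f sqrt); [fd | apply filterdiff_sqrt | intro; reflexivity]
  end.


Definition s1 (p q : R) := sqrt (1 + Cmod (p, q) * (Cmod (p, q) * 1)).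

Definition F1 (c p q : R) (h : U) : R :=
  c + fst h + atan (((p * fst (snd h) - q * - snd (snd h)) * sin (- (c + fst h)) + (p * - snd (snd h) + q * fst (snd h)) * cos (- (c + fst h))) / (s1 p q * sqrt (1 + (fst (snd h) * fst (snd h) + snd (snd h) * snd (snd h))) + ((p * fst (snd h) - q * - snd (snd h)) * cos (- (c + fst h)) - (p * - snd (snd h) + q * fst (snd h)) * sin (- (c + fst h))))).
Definition F2 (c p q : R) (h : U) : R :=
  s1 p q * (fst (snd h) * cos c - snd (snd h) * sin c) + sqrt (1 + (fst (snd h) * fst (snd h) + snd (snd h) * snd (snd h))) * (p * cos (- fst h) - q * sin (- fst h)).
Definition F3 (c p q : R) (h : U) : R :=
  s1 p q * (fst (snd h) * sin c + snd (snd h) * cos c) + sqrt (1 + (fst (snd h) * fst (snd h) + snd (snd h) * snd (snd h))) * (p * sin (- fst h) + q * cos (- fst h)).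

Definition L0 (c p q : R) (y : U) : U :=
  (fst y + ((p * fst (snd y) + q * snd (snd y)) * sin (- c) + (q * fst (snd y) - p * snd (snd y)) * cos (- c)) / s1 p q,
   (s1 p q * (fst (snd y) * cos c - snd (snd y) * sin c) + fst y * q,
    s1 p q * (fst (snd y) * sin c + snd (snd y) * cos c) - fst y * p)).

Lemma s1_pos p q : 0 < s1 p q.
Proof. unfold s1. apply sqrt_lt_R0. pose proof (Cmod_ge_0 (p,q)). nra. Qed.

Lemma F_diff c p q : filterdiff (fun h : U => (F1 c p q h, (F2 c p q h, F3 c p q h)) : U) (locally (0,(0,0)) : (U -> Prop) -> Prop) (L0 c p q).
Proof.
pose proof (s1_pos p q) as Hs.
eapply filterdiff_ext_lin.
apply Dpair3; unfold F1, F2, F3; fd.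
all: simpl; (assert (E1 : 1 + (0*0+0*0) = 1) by ring); rewrite ?E1, ?sqrt_1, ?Rplus_0_r, ?Ropp_0, ?sin_0, ?cos_0.
1,3,4: lra.
match goal with |- ?e <> 0 => replace e with (s1 p q) by ring; lra end.
intros [t [a b]]; unfold L0, Rsqr; simpl; f_equal; [field | f_equal; field]; lra.
Qed.


Lemma Cmod_sq a b : Cmod (a, b) * (Cmod (a, b) * 1) = a * a + b * b.
Proof. unfold Cmod. rewrite Rmult_1_r, sqrt_sqrt; simpl; nra. Qed.

Lemma F_eq c p q (h : G) : Lmul (c, (p, q)) h = (F1 c p q h, (F2 c p q h, F3 c p q h)).
Proof.
destruct h as [t [a b]]. unfold Lmul, gmul, cis, F1, F2, F3. simpl. fold (s1 p q).
rewrite Cmod_sq.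
unfold Cplus, Cmult, RtoC; simpl.
f_equal. f_equal; ring.
Qed.

Lemma dL_exists c p q : is_dL (c,(p,q)) (L0 c p q).
Proof. unfold is_dL. eapply filterdiff_ext. 2: apply F_diff. intro h; symmetry; apply F_eq. Qed.

Lemma dir (f l : U -> U) (pi : U -> R) (Hpi : is_linear pi) (v : U) :
  filterdiff f (locally ((0,(0,0)) : U)) l -> is_derive (fun t : R => pi (f (scal t v))) 0 (pi (l v)).
Proof.
intro Hf. unfold is_derive. eapply filterdiff_ext_lin.
apply (filterdiff_comp' (fun t : R_AbsRing => scal t v) (fun u => pi (f u)) 0 (fun t => scal t v) (fun u => pi (l u))).
apply filterdiff_scal_l.
assert (Hz : scal (0 : R_AbsRing) v = (0,(0,0))).
{ destruct v as [v1 [v2 v3]]. unfold scal; simpl. unfold prod_scal; simpl. unfold scal; simpl. unfold mult; simpl. unfold prod_scal; simpl. unfold scal; simpl; unfold mult; simpl. f_equal; [|f_equal]; ring. }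
rewrite Hz.
apply (filterdiff_comp' f pi). exact Hf. apply filterdiff_linear; exact Hpi.
intro y. simpl. destruct Hf as [Hl _].
rewrite (linear_scal l Hl), (linear_scal pi Hpi). reflexivity.
Qed.

Lemma dL_eq c p q dL : is_dL (c,(p,q)) dL -> forall x, dL x = L0 c p q x.
Proof.
intros H x. assert (H0 := dL_exists c p q). unfold is_dL in *.
assert (l1 : is_linear (fun u : U => fst u)) by apply is_linear_fst.
assert (l2 : is_linear (fun u : U => fst (snd u))).
{ apply (is_linear_comp (fun t : U => snd t) (fun t => fst t)). apply is_linear_snd. apply is_linear_fst. }
assert (l3 : is_linear (fun u : U => snd (snd u))).
{ apply (is_linear_comp (fun t : U => snd t) (fun t => snd t)). apply is_linear_snd. apply is_linear_snd. }
assert (E1 : fst (dL x) = fst (L0 c p q x)).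
{ pose proof (is_derive_unique _ _ _ (dir _ _ _ l1 x H)) as A.
  pose proof (is_derive_unique _ _ _ (dir _ _ _ l1 x H0)) as B.
  cbv beta in A, B. etransitivity; [symmetry; exact A | exact B]. }
assert (E2 : fst (snd (dL x)) = fst (snd (L0 c p q x))).
{ pose proof (is_derive_unique _ _ _ (dir _ _ _ l2 x H)) as A.
  pose proof (is_derive_unique _ _ _ (dir _ _ _ l2 x H0)) as B.
  cbv beta in A, B. etransitivity; [symmetry; exact A | exact B]. }
assert (E3 : snd (snd (dL x)) = snd (snd (L0 c p q x))).
{ pose proof (is_derive_unique _ _ _ (dir _ _ _ l3 x H)) as A.
  pose proof (is_derive_unique _ _ _ (dir _ _ _ l3 x H0)) as B.
  cbv beta in A, B. etransitivity; [symmetry; exact A | exact B]. }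
destruct (dL x) as [a1 [a2 a3]]; destruct (L0 c p q x) as [b1 [b2 b3]]; simpl in *; subst; reflexivity.
Qed.

Lemma Cmod2 a b : Cmod (a, b) ^ 2 = a * a + b * b.
Proof. rewrite <- Cmod_sq. ring. Qed.

Lemma s1_sq p q : s1 p q * s1 p q = 1 + (p * p + q * q).
Proof. unfold s1. rewrite Cmod_sq. apply sqrt_sqrt. nra. Qed.

Lemma CS a b u v : (a * u + b * v) * (a * u + b * v) <= (a*a+b*b) * (u*u+v*v).
Proof. pose proof (Rle_0_sqr (a*v - b*u)). unfold Rsqr in *. nra. Qed.

Lemma sqle (x y : R) : 0 <= y -> x * x <= y * y -> - y <= x <= y.
Proof. intros. split; nra. Qed.

Definition kk (eta : R) := eta / (2 * (1 + eta)).

Lemma L0_props eta c p q xi a b : 0 < eta -> cone eta (xi,(a,b)) -> L0 c p q (xi,(a,b)) <> gid ->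
  tau (L0 c p q (xi,(a,b))) > 0 /\
  eucl (L0 c p q (xi,(a,b))) / tau (L0 c p q (xi,(a,b))) <= 3 / kk eta + 2 / kk eta * Cmod (p, q).
Proof.
intros Heta [Hc Hxi] Hne. simpl in Hc, Hxi.
pose proof (s1_pos p q) as Hs. pose proof (s1_sq p q) as Hs2.
pose proof (Cmod_ge_0 (p,q)) as Hm0. pose proof (Cmod_sq p q) as Hm2. rewrite Rmult_1_r in Hm2.
pose proof (Cmod_ge_0 (a,b)) as Hz0. pose proof (Cmod_sq a b) as Hz2. rewrite Rmult_1_r in Hz2.
set (s := s1 p q) in *. set (m := Cmod (p,q)) in *. set (z := Cmod (a,b)) in *.
set (th := (2 + eta) / (2 * (1 + eta))).
assert (Hthd : th * (2 * (1 + eta)) = 2 + eta) by (unfold th; field; lra).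
assert (Hth1 : th * th * (1 + eta) >= 1).
{ assert (E : th * th * (1 + eta) * (4 * (1 + eta)) = (2 + eta) * (2 + eta)).
  { replace (th * th * (1 + eta) * (4 * (1 + eta))) with ((th * (2 * (1 + eta))) * (th * (2 * (1 + eta)))) by ring.
    rewrite Hthd. ring. }
  nra. }
assert (Hth2 : 0 <= th <= 1) by nra.
assert (Hth3 : th < 1) by nra.
assert (Hzx : z*z*(1+eta) <= xi*xi) by nra.
assert (Htr : sin (-c) * sin (-c) + cos (-c) * cos (-c) = 1) by (pose proof (sin2_cos2 (-c)); unfold Rsqr in *; lra).
assert (Htr' : sin c * sin c + cos c * cos c = 1) by (pose proof (sin2_cos2 c); unfold Rsqr in *; lra).
set (sn := sin (-c)) in *. set (cs := cos (-c)) in *. set (sn' := sin c) in *. set (cs' := cos c) in *.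
set (I := (p*a + q*b)*sn + (q*a - p*b)*cs).
assert (HI : I * I <= (m*m)*(z*z)).
{ replace I with (a * (p*sn + q*cs) + b * (q*sn - p*cs)) by (unfold I; ring).
  replace ((m*m)*(z*z)) with ((a*a+b*b)*((p*sn + q*cs)*(p*sn + q*cs) + (q*sn - p*cs)*(q*sn - p*cs))).
  apply CS. rewrite Hm2, Hz2. replace ((p*sn + q*cs)*(p*sn + q*cs) + (q*sn - p*cs)*(q*sn - p*cs)) with ((p*p+q*q)*(sn*sn+cs*cs)) by ring.
  rewrite Htr. ring. }
set (J := I / s).
assert (HJs : J * s = I) by (unfold J; field; lra).
assert (HJ2 : J * J <= z * z).
{ apply (Rmult_le_reg_r (s*s)). nra.
  replace (J*J*(s*s)) with (I*I) by (rewrite <- HJs; ring). nra. }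
assert (Hz3 : z*z <= th*th*(xi*xi)).
{ apply (Rmult_le_reg_r (1+eta)). lra. nra. }
assert (HJb : - (th*xi) <= J <= th*xi).
{ apply sqle. nra. nra. }
assert (Hxp : xi > 0).
{ destruct Hxi as [Hx|Hx]; [exact Hx|]. exfalso. apply Hne.
  assert (Ha : a = 0) by nra. assert (Hb : b = 0) by nra. subst xi a b.
  unfold L0, gid, RtoC; simpl. f_equal; [unfold Rdiv; ring | f_equal; ring]. }
change (tau (L0 c p q (xi, (a, b)))) with (xi + J).
split. nra.
set (v2x := s*(a*cs' - b*sn') + xi*q). set (v2y := s*(a*sn'+b*cs') - xi*p).
change (eucl (L0 c p q (xi, (a, b)))) with (sqrt ((xi + J)^2 + Cmod (v2x, v2y) ^ 2)).
rewrite Cmod2.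
set (C := (a*cs' - b*sn')*q + (a*sn'+b*cs')*(-p)).
assert (HV : v2x*v2x + v2y*v2y = s*s*(z*z) + xi*xi*(m*m) + 2*s*xi*C).
{ rewrite Hz2, Hm2. unfold v2x, v2y, C.
  replace (a*a+b*b) with ((a*a+b*b)*(sn'*sn'+cs'*cs')) by (rewrite Htr'; ring). ring. }
assert (HC : C*C <= (z*z)*(m*m)).
{ unfold C. rewrite Hz2, Hm2. 
  replace ((a*a+b*b)*(p*p+q*q)) with (((a*cs' - b*sn')*(a*cs' - b*sn') + (a*sn'+b*cs')*(a*sn'+b*cs'))*(q*q+(-p)*(-p))).
  apply CS.
  replace (a*a+b*b) with ((a*a+b*b)*(sn'*sn'+cs'*cs')) by (rewrite Htr'; ring). ring. }
assert (HCb : - (z*m) <= C <= z*m) by (apply sqle; nra).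
assert (HV2 : v2x*v2x + v2y*v2y <= (s*z + xi*m)*(s*z + xi*m)).
{ rewrite HV. assert (0 <= s*xi*(z*m - C)) by (apply Rmult_le_pos; nra). nra. }
assert (Hzx2 : - xi <= z <= xi) by (apply sqle; nra).
assert (Hsm : - (1+m) <= s <= 1+m) by (apply sqle; nra).
assert (Hsz : s*z <= (1+m)*xi) by (apply Rmult_le_compat; lra).
assert (HW : 0 <= s*z + xi*m <= (1+2*m)*xi) by nra.
assert (HE : sqrt ((xi + J)^2 + (v2x*v2x + v2y*v2y)) <= (3+2*m)*xi).
{ rewrite <- (sqrt_square ((3+2*m)*xi)) by nra. apply sqrt_le_1_alt. nra. }
assert (Hk : kk eta = 1 - th) by (unfold kk, th; field; lra).
rewrite Hk. set (k := 1 - th) in *.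
assert (Hk0 : 0 < k) by (unfold k; lra).
assert (HT : k * xi <= xi + J) by (unfold k; nra).
unfold Rdiv. apply (Rmult_le_reg_r (xi + J)). nra.
rewrite Rmult_assoc, Rinv_l, Rmult_1_r by nra.
assert (Hik : / k * k = 1) by (field; lra).
assert (Hik0 : 0 < / k) by (apply Rinv_0_lt_compat; lra).
assert (xi <= / k * (xi + J)) by nra.
nra.
Qed.

Theorem mainTheorem9 (eta : R) (heta : 0 < eta) :
  (forall g : G, exists dL : G -> G, is_dL g dL) /\
  (forall (g : G) (dL : G -> G), is_dL g dL ->
     forall x : G, cone eta x -> dL x <> gid -> tau (dL x) > 0) /\
  (exists A B : R, 0 < A /\ 0 < B /\
     forall (g : G) (dL : G -> G), is_dL g dL ->
       forall x : G, cone eta x -> dL x <> gid ->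
         eucl (dL x) / tau (dL x) <= A + B * Cmod (snd g)).
Proof.
assert (Hk : 0 < kk eta) by (unfold kk; apply Rdiv_lt_0_compat; lra).
split; [|split].
- intros [c [p q]]. exists (L0 c p q). apply dL_exists.
- intros [c [p q]] dL H x Hc Hne.
  pose proof (dL_eq c p q dL H x) as E. rewrite E in *. destruct x as [xi [a b]].
  exact (proj1 (L0_props eta c p q xi a b heta Hc Hne)).
- exists (3 / kk eta), (2 / kk eta). split; [|split].
  + apply Rdiv_lt_0_compat; lra.
  + apply Rdiv_lt_0_compat; lra.
  + intros [c [p q]] dL H x Hc Hne.
    pose proof (dL_eq c p q dL H x) as E. rewrite E in *. destruct x as [xi [a b]].
    exact (proj2 (L0_props eta c p q xi a b heta Hc Hne)).
Qed.
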